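(* Let $\mathbb{X}$ be a restriction category. Then $\mathbb{X}$ admits a restriction terminal object if and only if $\mathbf{L}[\mathbb{X}]$ admits a local terminal object. Moreover, $\mathbb{X}$ admits restriction products (of every pair of objects) if and only if $\mathbf{L}[\mathbb{X}]$ admits local products (of every pair of objects).
   Context: Composition is diagrammatic. A restriction category is a category with an assignment to each $f:A\to B$ of $\bar f:A\to A$ such that $\bar ff=f$; $\bar f\bar g=\bar g\bar f$ and $\bar g\bar f=\overline{\bar gf}$ for $f:A\to B$, $g:A\to C$; $f\bar g=\overline{fg}f$ for $f:A\to B$, $g:B\to C$. $f$ is total if $\bar f=\mathrm{id}$. A restriction terminal object is an object $*$ such that each object $A$ has a unique total morphism $!_A:A\to *$ and $f!_B=\bar f!_A$ for every $f:A\to B$. A restriction product of $A$ and $B$ is an object $A\times B$ with total morphisms $\pi_A:A\times B\to A$, $\pi_B:A\times B\to B$ such that for all $f:C\to A$, $g:C\to B$ there is a unique $\langle f,g\rangle:C\to A\times B$ with $\langle f,g\rangle\pi_A=\bar gf$ and $\langle f,g\rangle\pi_B=\bar fg$. $\mathbf{L}[\mathbb{X}]$: objects $(A,a)$ with $a=\bar a:A\to A$; morphisms $f:(A,a)\to(B,b)$ are $f:A\to B$ with $\bar f=a$, $fb=f$; identity $a$; composition as in $\mathbb{X}$; it is a local category with $\mathsf{L}(A,a)=(A,\mathrm{id}_A)$ and $\eta_{(A,a)}=a$. In a local category (a category with objects $\mathsf{L}M$ and morphisms $\eta_M:M\to\mathsf{L}M$ satisfying the local category axioms), an object $M$ is total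 if $M=\mathsf{L}M$ and $\eta_M=\mathrm{id}_M$. A local terminal object is a total object which is terminal. A local product of $M$ and $N$ is a product $M\times N$ (with projections) in the category such that the product $\mathsf{L}M\times\mathsf{L}N$ exists, $\mathsf{L}M\times\mathsf{L}N=\mathsf{L}(M\times N)$, and $\eta_{M\times N}=\eta_M\times\eta_N$. *)

(* Defs.v *)
Set Implicit Arguments.
Unset Strict Implicit.

Record RestrictionCategory := {
  Obj : Type;
  Hom : Obj -> Obj -> Type;
  idm : forall A, Hom A A;
  comp : forall A B C, Hom A B -> Hom B C -> Hom A C;   (* comp f g = f;g *)
  rst : forall A B, Hom A B -> Hom A A;
  comp_assoc : forall A B C D (f : Hom A B) (g : Hom B C) (h : Hom C D),
      comp (comp f g) h = comp f (comp g h);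
  comp_id_l : forall A B (f : Hom A B), comp (idm A) f = f;
  comp_id_r : forall A B (f : Hom A B), comp f (idm B) = f;
  R1 : forall A B (f : Hom A B), comp (rst f) f = f;
  R2 : forall A B C (f : Hom A B) (g : Hom A C), comp (rst f) (rst g) = comp (rst g) (rst f);
  R3 : forall A B C (f : Hom A B) (g : Hom A C), comp (rst g) (rst f) = rst (comp (rst g) f);
  R4 : forall A B C (f : Hom A B) (g : Hom B C), comp f (rst g) = comp (rst (comp f g)) f
}.

Arguments Hom : clear implicits.
Arguments idm {X} A : rename.
Arguments comp {X A B C} f g : rename.
Arguments rst {X A B} f : rename.

Section RC.
Variable X : RestrictionCategory.

Definition total {A B : Obj X} (f : Hom X A B) : Prop := rst f = idm A.

Definition is_restriction_terminal (T : Obj X) : Prop :=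
  exists bang : forall A : Obj X, Hom X A T,
    (forall A, total (bang A)) /\
    (forall A (h : Hom X A T), total h -> h = bang A) /\
    (forall A B (f : Hom X A B), comp f (bang B) = comp (rst f) (bang A)).

Definition is_restriction_product (A B P : Obj X)
    (pA : Hom X P A) (pB : Hom X P B) : Prop :=
  total pA /\ total pB /\
  forall (C : Obj X) (f : Hom X C A) (g : Hom X C B),
    exists h : Hom X C P,
      comp h pA = comp (rst g) f /\ comp h pB = comp (rst f) g /\
      forall h' : Hom X C P,
        comp h' pA = comp (rst g) f -> comp h' pB = comp (rst f) g -> h' = h.

Lemma rst_comp_rst {A B C} (f : Hom X A B) (g : Hom X B C) :
  comp (rst (comp f g)) (rst f) = rst (comp f g).
Proof.
  rewrite R2, R3, <- comp_assoc, R1. reflexivity.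
Qed.

Lemma rst_idm (A : Obj X) : rst (idm A) = idm A.
Proof.
  rewrite <- (comp_id_r (rst (idm A))). apply R1.
Qed.

Record LObj := {
  lcar : Obj X;
  lidem : Hom X lcar lcar;
  lidem_rst : rst lidem = lidem
}.

Record LHom (M N : LObj) := {
  lmor : Hom X (lcar M) (lcar N);
  lmor_rst : rst lmor = lidem M;
  lmor_post : comp lmor (lidem N) = lmor
}.

Lemma LId_post (M : LObj) : comp (lidem M) (lidem M) = lidem M.
Proof.
  pose proof (R1 (lidem M)) as H. rewrite (lidem_rst M) in H. exact H.
Qed.

Definition LId (M : LObj) : LHom M M :=
  {| lmor := lidem M; lmor_rst := lidem_rst M; lmor_post := LId_post M |}.

Lemma LComp_rst {M N P : LObj} (f : LHom M N) (g : LHom N P) :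
  rst (comp (lmor f) (lmor g)) = lidem M.
Proof.
  pose proof (R4 (lmor f) (lmor g)) as H.
  rewrite (lmor_rst g), (lmor_post f) in H.
  rewrite <- (lmor_rst f).
  transitivity (rst (comp (rst (comp (lmor f) (lmor g))) (lmor f))).
  - rewrite <- R3, rst_comp_rst. reflexivity.
  - rewrite <- H. reflexivity.
Qed.

Lemma LComp_post {M N P : LObj} (f : LHom M N) (g : LHom N P) :
  comp (comp (lmor f) (lmor g)) (lidem P) = comp (lmor f) (lmor g).
Proof. rewrite comp_assoc, (lmor_post g). reflexivity. Qed.

Definition LComp {M N P : LObj} (f : LHom M N) (g : LHom N P) : LHom M P :=
  {| lmor := comp (lmor f) (lmor g); lmor_rst := LComp_rst f g;
     lmor_post := LComp_post f g |}.

Definition LL (M : LObj) : LObj :=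
  {| lcar := lcar M; lidem := idm (lcar M); lidem_rst := rst_idm (lcar M) |}.

Lemma Leta_post (M : LObj) : comp (lidem M) (idm (lcar M)) = lidem M.
Proof. apply comp_id_r. Qed.

Definition Leta (M : LObj) : LHom M (LL M) :=
  @Build_LHom M (LL M) (lidem M) (lidem_rst M) (Leta_post M).

End RC.

(** * Data of a local category (the operations used by the definitions of
    total objects, local terminal objects and local products) *)
Record LocalData := {
  LOb : Type;
  LHm : LOb -> LOb -> Type;
  lid : forall M, LHm M M;
  lcomp : forall M N P, LHm M N -> LHm N P -> LHm M P;  (* diagrammatic *)
  Lo : LOb -> LOb;
  eta : forall M, LHm M (Lo M)
}.
Arguments LHm : clear implicits.
Arguments lid {C} M : rename.
Arguments lcomp {C M N P} f g : rename.
Arguments Lo {C} M : rename.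
Arguments eta {C} M : rename.

Section Local.
Variable C : LocalData.

Definition is_terminal (T : LOb C) : Prop :=
  forall M : LOb C, exists t : LHm C M T, forall t' : LHm C M T, t' = t.

Definition is_product (M N P : LOb C) (p1 : LHm C P M) (p2 : LHm C P N) : Prop :=
  forall (Z : LOb C) (f : LHm C Z M) (g : LHm C Z N),
    exists h : LHm C Z P,
      lcomp h p1 = f /\ lcomp h p2 = g /\
      forall h' : LHm C Z P, lcomp h' p1 = f -> lcomp h' p2 = g -> h' = h.

Definition total_obj (M : LOb C) : Prop :=
  exists e : Lo M = M, eq_rect (Lo M) (fun Y => LHm C M Y) (eta M) M e = lid M.

Definition is_local_terminal (T : LOb C) : Prop :=
  total_obj T /\ is_terminal T.

(** P with projections p1,p2 is a local product of M and N: it is a product,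
    L P carries a product LM x LN (with projections q1,q2), and
    eta_P = eta_M x eta_N, i.e. eta_P;q1 = p1;eta_M and eta_P;q2 = p2;eta_N. *)
Definition is_local_product (M N P : LOb C) (p1 : LHm C P M) (p2 : LHm C P N) : Prop :=
  is_product p1 p2 /\
  exists (q1 : LHm C (Lo P) (Lo M)) (q2 : LHm C (Lo P) (Lo N)),
    is_product q1 q2 /\
    lcomp (eta P) q1 = lcomp p1 (eta M) /\
    lcomp (eta P) q2 = lcomp p2 (eta N).

End Local.

Definition LX (X : RestrictionCategory) : LocalData :=
  {| LOb := LObj X; LHm := @LHom X; lid := @LId X; lcomp := @LComp X;
     Lo := @LL X; eta := @Leta X |}.

(* Main.v *)
Require Import Defs.
From Stdlib Require Import ProofIrrelevance ClassicalEpsilon Eqdep.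

Section H.
Variable X : RestrictionCategory.

Lemma LHom_eq (M N : LObj X) (f g : LHom M N) : lmor f = lmor g -> f = g.
Proof.
  destruct f as [f1 f2 f3], g as [g1 g2 g3]; simpl; intro E; subst.
  f_equal; apply proof_irrelevance.
Qed.

Lemma rst_rst {A B : Obj X} (f : Hom X A B) : rst (rst f) = rst f.
Proof.
  pose proof (R3 (idm A) f) as H. rewrite rst_idm, !comp_id_r in H.
  symmetry; exact H.
Qed.

Lemma rst_total {A B C : Obj X} (f : Hom X A B) (g : Hom X B C) :
  rst g = idm B -> rst (comp f g) = rst f.
Proof.
  intro Hg. pose proof (R4 f g) as H. rewrite Hg, comp_id_r in H.
  transitivity (rst (comp (rst (comp f g)) f)).
  - rewrite <- R3, rst_comp_rst. reflexivity.
  - rewrite <- H. reflexivity.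
Qed.

Lemma idem {A : Obj X} (a : Hom X A A) : rst a = a -> comp a a = a.
Proof. intro h. pose proof (R1 a) as H. rewrite h in H. exact H. Qed.

Lemma rst_rr {A B C : Obj X} (f : Hom X A B) (g : Hom X A C) :
  rst (comp (rst f) (rst g)) = comp (rst f) (rst g).
Proof. rewrite <- R3, rst_rst. reflexivity. Qed.

Arguments idem {A} [a] _.

Definition LA (A : Obj X) : LObj X := Build_LObj (rst_idm A).

Lemma prodL (M N : LObj X) (Pc : Obj X) (pA : Hom X Pc (lcar M)) (pB : Hom X Pc (lcar N))
  (HP : is_restriction_product pA pB) (p : Hom X Pc Pc) (hp : rst p = p)
  (Hpe : p = comp (rst (comp pA (lidem M))) (rst (comp pB (lidem N)))) :
  exists (p1 : LHom (Build_LObj hp) M) (p2 : LHom (Build_LObj hp) N),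
    lmor p1 = comp p pA /\ lmor p2 = comp p pB /\ @is_product (LX X) M N (Build_LObj hp) p1 p2.
Proof.
  destruct HP as [tA [tB HU]].
  unfold total in tA, tB.
  set (a := lidem M) in *. set (b := lidem N) in *.
  assert (ha : rst a = a) by apply lidem_rst.
  assert (hb : rst b = b) by apply lidem_rst.
  assert (F1A : rst (comp p pA) = p) by (rewrite rst_total; auto).
  assert (F1B : rst (comp p pB) = p) by (rewrite rst_total; auto).
  assert (KA : comp (rst (comp pA a)) pA = comp pA a).
  { rewrite <- R4, ha. reflexivity. }
  assert (KB : comp (rst (comp pB b)) pB = comp pB b).
  { rewrite <- R4, hb. reflexivity. }
  assert (F2A : comp (comp p pA) a = comp p pA).
  { rewrite Hpe, R2, !comp_assoc, <- (comp_assoc (rst (comp pA a)) pA a), KA, (comp_assoc pA a a), (idem ha). reflexivity. }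
  assert (F2B : comp (comp p pB) b = comp p pB).
  { rewrite Hpe, !comp_assoc, <- (comp_assoc (rst (comp pB b)) pB b), KB, (comp_assoc pB b b), (idem hb). reflexivity. }
  exists (Build_LHom (N:=M) (M:=Build_LObj hp) F1A F2A).
  exists (Build_LHom (N:=N) (M:=Build_LObj hp) F1B F2B).
  split; [reflexivity|split; [reflexivity|]].
  intros Z f g. simpl in Z, f, g.
  set (f0 := lmor f). set (g0 := lmor g).
  assert (rf : rst f0 = lidem Z) by apply lmor_rst.
  assert (rg : rst g0 = lidem Z) by apply lmor_rst.
  assert (E1 : comp (rst g0) f0 = f0) by (rewrite rg, <- rf; apply R1).
  assert (E2 : comp (rst f0) g0 = g0) by (rewrite rf, <- rg; apply R1).
  destruct (HU (lcar Z) f0 g0) as [h0 [H1 [H2 Hu]]].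
  rewrite E1 in H1. rewrite E2 in H2.
  assert (rh : rst h0 = lidem Z).
  { rewrite <- (rst_total h0 pA tA). rewrite H1. exact rf. }
  assert (hp0 : comp h0 p = h0).
  { assert (Pf : comp f0 a = f0) by apply (lmor_post f).
    assert (Pg : comp g0 b = g0) by apply (lmor_post g).
    rewrite Hpe, <- comp_assoc, (R4 h0 (comp pA a)), <- (comp_assoc h0 pA a), H1, Pf, rf, <- rh, R1.
    rewrite (R4 h0 (comp pB b)), <- (comp_assoc h0 pB b), H2, Pg, rg, <- rh, R1. reflexivity. }
  exists (Build_LHom (M:=Z) (N:=Build_LObj hp) rh hp0).
  split; [apply LHom_eq; simpl; rewrite <- comp_assoc, hp0; exact H1|].
  split; [apply LHom_eq; simpl; rewrite <- comp_assoc, hp0; exact H2|].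
  intros h' Hh1 Hh2. apply LHom_eq. simpl.
  apply (f_equal (@lmor _ _ _)) in Hh1. apply (f_equal (@lmor _ _ _)) in Hh2.
  simpl in Hh1, Hh2.
  pose proof (lmor_post h') as post. cbn in post, Hh1, Hh2.
  rewrite <- comp_assoc, post in Hh1. rewrite <- comp_assoc, post in Hh2.
  apply Hu; [rewrite E1|rewrite E2]; assumption.
Qed.

End H.
Arguments LHom_eq {X M N} f g _.
Arguments rst_rst {X A B} f.
Arguments rst_total {X A B C} f g _.
Arguments rst_rr {X A B C} f g.
Arguments LA {X} A.
Arguments prodL {X M N Pc pA pB} HP {p} hp Hpe.

Theorem proposition6p8 (X : RestrictionCategory) :
  ((exists T : Obj X, is_restriction_terminal T) <->
   (exists M : LOb (LX X), is_local_terminal M))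
  /\
  ((forall A B : Obj X, exists (P : Obj X) (pA : Hom X P A) (pB : Hom X P B),
        is_restriction_product pA pB) <->
   (forall M N : LOb (LX X), exists (P : LOb (LX X)) (p1 : LHm _ P M) (p2 : LHm _ P N),
        is_local_product p1 p2)).
Proof.
  split; split.
  - intros [T [bang [Ht [Hu Hn]]]].
    exists (LA T). split.
    + exists eq_refl. simpl. apply LHom_eq. reflexivity.
    + intro M. simpl in M |- *.
      assert (r : rst (comp (lidem M) (bang (lcar M))) = lidem M).
      { rewrite rst_total by apply Ht. apply lidem_rst. }
      assert (q : comp (comp (lidem M) (bang (lcar M))) (lidem (LA T))
                  = comp (lidem M) (bang (lcar M))) by apply comp_id_r.
      exists (@Build_LHom X M (LA T) _ r q).
      intro t'. apply LHom_eq. simpl.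
      assert (P1 : comp (lmor t') (idm T) = lmor t') by apply (lmor_post t').
      pose proof (lmor_rst t') as Rt. cbn in Rt, P1 |- *.
      rewrite <- P1, (Hu T (idm T) (rst_idm T)), Hn, Rt. reflexivity.
  - intros [M [[e He] Hterm]].
    destruct M as [T a pa].
    assert (ea : a = idm T).
    { pose proof (f_equal (fun Y : LObj X => existT (fun A => Hom X A A) (lcar Y) (lidem Y)) e) as E.
      simpl in E. apply EqdepTheory.inj_pair2 in E. symmetry; exact E. }
    subst a.
    exists T.
    exists (fun A => lmor (proj1_sig (constructive_indefinite_description _ (Hterm (LA A))))).
    split; [|split].
    + intro A. unfold total. destruct (constructive_indefinite_description _ _) as [t Ht]; simpl.
      apply (lmor_rst t).
    + intros A h Hh. destruct (constructive_indefinite_description _ _) as [t Ht]; simpl.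
      assert (q : comp h (idm T) = h) by apply comp_id_r.
      pose proof (Ht (@Build_LHom X (LA A) (Build_LObj pa) h Hh q)) as E.
      rewrite <- E. reflexivity.
    + intros A B f.
      cbv beta.
      set (tA := proj1_sig (constructive_indefinite_description _ (Hterm (LA A)))).
      set (tB := proj1_sig (constructive_indefinite_description _ (Hterm (LA B)))).
      pose (LF := Build_LObj (rst_rst f)).
      destruct (Hterm LF) as [t Ht].
      assert (r1 : rst (comp f (lmor tB)) = lidem LF).
      { simpl. apply rst_total. apply (lmor_rst tB). }
      assert (q1 : comp (comp f (lmor tB)) (idm T) = comp f (lmor tB)) by apply comp_id_r.
      assert (r2 : rst (comp (rst f) (lmor tA)) = lidem LF).
      { simpl. rewrite rst_total by apply (lmor_rst tA). apply rst_rst. }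
      assert (q2 : comp (comp (rst f) (lmor tA)) (idm T) = comp (rst f) (lmor tA)) by apply comp_id_r.
      pose proof (Ht (@Build_LHom X LF (Build_LObj pa) _ r1 q1)) as E1.
      pose proof (Ht (@Build_LHom X LF (Build_LObj pa) _ r2 q2)) as E2.
      rewrite <- E2 in E1. apply (f_equal (@lmor _ _ _)) in E1. simpl in E1. exact E1.
  - intros HP M N. simpl in M, N.
    destruct (HP (lcar M) (lcar N)) as [Pc [pA [pB HPr]]].
    pose (p := comp (rst (comp pA (lidem M))) (rst (comp pB (lidem N)))).
    assert (hp : rst p = p) by apply rst_rr.
    destruct (prodL HPr hp eq_refl) as [p1 [p2 [E1 [E2 Hpr]]]].
    assert (hpe : idm Pc = comp (rst (comp pA (lidem (LL M)))) (rst (comp pB (lidem (LL N))))).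
    { simpl. rewrite !comp_id_r. destruct HPr as [tA [tB _]].
      unfold total in tA, tB. rewrite tA, tB, comp_id_r. reflexivity. }
    destruct (prodL (M:=LL M) (N:=LL N) HPr (rst_idm Pc) hpe) as [q1 [q2 [F1 [F2 Hq]]]].
    exists (Build_LObj hp), p1, p2. split; [exact Hpr|].
    exists q1, q2. split; [exact Hq|].
    split; apply LHom_eq; simpl.
    + transitivity (comp p (comp (idm Pc) pA)); [apply f_equal; exact F1|].
      rewrite comp_id_l. transitivity (lmor p1); [exact (eq_sym E1)|].
      symmetry; apply (lmor_post p1).
    + transitivity (comp p (comp (idm Pc) pB)); [apply f_equal; exact F2|].
      rewrite comp_id_l. transitivity (lmor p2); [exact (eq_sym E2)|].
      symmetry; apply (lmor_post p2).
  - intros HL A B.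
    destruct (HL (LA A) (LA B)) as [P [p1 [p2 [_ [q1 [q2 [Hq _]]]]]]].
    exists (lcar P), (lmor q1), (lmor q2).
    assert (tA : rst (lmor q1) = idm (lcar P)) by apply (lmor_rst q1).
    assert (tB : rst (lmor q2) = idm (lcar P)) by apply (lmor_rst q2).
    split; [exact tA|split; [exact tB|]].
    intros C f g.
    pose (Z := Build_LObj (rst_rr f g)).
    assert (rf : rst (comp (rst g) f) = lidem Z) by (simpl; rewrite <- R3; apply R2).
    assert (qf : comp (comp (rst g) f) (idm A) = comp (rst g) f) by apply comp_id_r.
    assert (rg : rst (comp (rst f) g) = lidem Z) by (simpl; rewrite <- R3; reflexivity).
    assert (qg : comp (comp (rst f) g) (idm B) = comp (rst f) g) by apply comp_id_r.
    destruct (Hq Z (@Build_LHom X Z (LA A) _ rf qf) (@Build_LHom X Z (LA B) _ rg qg))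
      as [h [H1 [H2 Hu]]].
    exists (lmor h).
    apply (f_equal (@lmor _ _ _)) in H1. apply (f_equal (@lmor _ _ _)) in H2.
    simpl in H1, H2.
    split; [exact H1|split; [exact H2|]].
    intros h' E1 E2.
    assert (rh : rst h' = lidem Z).
    { transitivity (rst (comp h' (lmor q1))); [symmetry; apply rst_total; exact tA|].
      transitivity (rst (comp (rst g) f)); [apply f_equal; exact E1| exact rf]. }
    assert (qh : comp h' (lidem (LL P)) = h') by apply comp_id_r.
    pose proof (Hu (@Build_LHom X Z (LL P) h' rh qh)) as U.
    assert (U' : @Build_LHom X Z (LL P) h' rh qh = h).
    { apply U; apply LHom_eq; simpl; assumption. }
    rewrite <- U'. reflexivity.
Qed.
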